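(* Let $\lambda>0$, let $x^{(1)},\dots,x^{(N)}\in\mathbb{R}^d$ and $\hat\mu=\frac1N\sum_{i=1}^N\delta_{x^{(i)}}$. Define $D_{XX}\in\mathbb{R}^{(Nd)\times N}$ by $[D_{XX}]_{(i,l),j}=\partial_{1,l}k(x^{(i)},x^{(j)})$, $H_{XX}\in\mathbb{R}^{(Nd)\times(Nd)}$ by $[H_{XX}]_{(i,l),(j,m)}=\partial_{1,l}\partial_{2,m}k(x^{(i)},x^{(j)})$, and for $z\in\mathbb{R}^d$ the vectors $\mathbb K_X(z)=[k(x^{(1)},z),\dots,k(x^{(N)},z)]^\top\in\mathbb{R}^N$ and $\mathbb D_X(z)\in\mathbb{R}^{Nd}$ with entries $[\mathbb D_X(z)]_{(i,l)}=\partial_{1,l}k(x^{(i)},z)$. Let $\mathbf 1_N\in\mathbb{R}^N$ be the all-ones vector. Then for all $z\in\mathbb{R}^d$, $$f_{\hat\mu,\pi}(z)=\frac{\mathbf 1_N^\top\mathbb K_X(z)}{N\lambda}-\frac{\mathbb E_{Y\sim\pi}[k(Y,z)]}{\lambda}-\mathbb D_X(z)^\top(H_{XX}+N\lambda\mathrm{Id})^{-1}\Big(\frac{D_{XX}\mathbf 1_N}{N\lambda}-\frac{\mathbb E_{Y\sim\pi}[\mathbb D_X(Y)]}{\lambda}\Big).$$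
   Context: $k$ is a symmetric positive definite kernel on $\mathbb{R}^d$, sufficiently continuously differentiable, with RKHS $\mathcal H$; $\partial_{1,l},\partial_{2,m}$ are partial derivatives in the first/second argument. $\pi$ is a probability measure for which the mean embedding $m_\pi=\int k(y,\cdot)\mathrm{d}\pi(y)\in\mathcal H$ is well defined; $m_{\hat\mu}=\frac1N\sum_ik(x^{(i)},\cdot)$. $S_{\hat\mu}:\mathcal H\to\mathcal H$ is defined by $\langle f,S_{\hat\mu}g\rangle_{\mathcal H}=\frac1N\sum_{i=1}^N\nabla f(x^{(i)})^\top\nabla g(x^{(i)})$, and $f_{\hat\mu,\pi}:=(S_{\hat\mu}+\lambda\mathrm{Id})^{-1}(m_{\hat\mu}-m_\pi)$. Index pairs $(i,l)$, $i\le N$, $l\le d$, are identified with indices $1,\dots,Nd$ in a fixed order. *)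

(* Defs.v *)
From HB Require Import structures.
From mathcomp Require Import all_boot all_order all_algebra.
From mathcomp Require Import all_classical all_reals all_analysis.
Set Implicit Arguments. Unset Strict Implicit. Unset Printing Implicit Defensive.
Import Order.TTheory GRing.Theory Num.Theory.
Import numFieldNormedType.Exports.
Local Open Scope classical_set_scope.
Local Open Scope ring_scope.

Section Defs.
Variables (R : realType) (d : nat).
Local Notation V := 'rV[R]_d.
Local Notation F := (V -> R).

Definition ebasis (l : 'I_d) : V := delta_mx 0 l.

Definition partial (l : 'I_d) (f : F) (x : V) : R := 'D_(ebasis l) f x.

Definition d1k (k : V -> V -> R) (l : 'I_d) (x y : V) : R :=
  partial l (fun x' => k x' y) x.
Definition d2k (k : V -> V -> R) (m : 'I_d) (x y : V) : R :=
  partial m (fun y' => k x y') y.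
Definition d12k (k : V -> V -> R) (l m : 'I_d) (x y : V) : R :=
  partial l (fun x' => d2k k m x' y) x.

Definition kernel_spd (k : V -> V -> R) : Prop :=
  (forall x y, k x y = k y x) /\
  (forall (n : nat) (c : 'I_n -> R) (p : 'I_n -> V),
      0 <= \sum_(i < n) \sum_(j < n) c i * c j * k (p i) (p j)).

Definition kernel_C11 (k : V -> V -> R) : Prop :=
  continuous (fun q : V * V => k q.1 q.2) /\
  (forall l x y, derivable (fun x' => k x' y) x (ebasis l)) /\
  (forall m x y, derivable (fun y' => k x y') y (ebasis m)) /\
  (forall l m x y, derivable (fun x' => d2k k m x' y) x (ebasis l)) /\
  (forall l, continuous (fun q : V * V => d1k k l q.1 q.2)) /\
  (forall m, continuous (fun q : V * V => d2k k m q.1 q.2)) /\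
  (forall l m, continuous (fun q : V * V => d12k k l m q.1 q.2)).

Definition is_RKHS (k : V -> V -> R) (H : set F) (ip : F -> F -> R) : Prop :=
  H (fun=> 0) /\
  (forall f g, H f -> H g -> H (f \+ g)) /\
  (forall (a : R) f, H f -> H (fun x => a * f x)) /\
  (forall f g, H f -> H g -> ip f g = ip g f) /\
  (forall f g h, H f -> H g -> H h -> ip (f \+ g) h = ip f h + ip g h) /\
  (forall (a : R) f g, H f -> H g -> ip (fun x => a * f x) g = a * ip f g) /\
  (forall f, H f -> 0 <= ip f f) /\
  (forall f, H f -> ip f f = 0 -> f = (fun=> 0)) /\
  (forall u : nat -> F, (forall n, H (u n)) ->
     (forall e : R, 0 < e -> exists M, forall m n, (M <= m)%N -> (M <= n)%N ->
        ip (u m \- u n) (u m \- u n) < e) ->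
     exists f, H f /\ forall e : R, 0 < e -> exists M, forall n, (M <= n)%N ->
        ip (u n \- f) (u n \- f) < e) /\
  (forall x, H (k x)) /\
  (forall f x, H f -> ip f (k x) = f x).

(* m is the mean embedding of the law pi of Y (weak/Pettis integral of
   y |-> k(y,.)): m in H and <g, m> = E[g(Y)] for all g in H *)
Definition is_mean_embedding (dT : measure_display) (T : measurableType dT)
    (P : probability T R) (Y : T -> V) (H : set F) (ip : F -> F -> R) (m : F) :=
  H m /\ forall g, H g ->
    P.-integrable setT (fun t => (g (Y t))%:E) /\
    ip g m = Rintegral P setT (fun t => g (Y t)).

Definition is_S_op (N : nat) (x : 'I_N -> V) (H : set F) (ip : F -> F -> R)
    (S : F -> F) : Prop :=
  forall g, H g -> H (S g) /\
    forall f, H f -> ip f (S g) =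
      N%:R^-1 * \sum_(i < N) \sum_(l < d) partial l f (x i) * partial l g (x i).

(* index pairs (i,l) <-> 'I_(N*d), via MathComp's fixed flattening order *)
Definition pair_of (N : nat) (q : 'I_(N * d)) : 'I_N * 'I_d :=
  enum_val (cast_ord (esym (mxvec_cast N d)) q).

Definition DXX (k : V -> V -> R) (N : nat) (x : 'I_N -> V) : 'M[R]_(N * d, N) :=
  \matrix_(q, j) d1k k (pair_of q).2 (x (pair_of q).1) (x j).
Definition HXX (k : V -> V -> R) (N : nat) (x : 'I_N -> V) : 'M[R]_(N * d) :=
  \matrix_(q, r) d12k k (pair_of q).2 (pair_of r).2 (x (pair_of q).1) (x (pair_of r).1).
Definition KX (k : V -> V -> R) (N : nat) (x : 'I_N -> V) (z : V) : 'cV[R]_N :=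
  \col_i k (x i) z.
Definition DX (k : V -> V -> R) (N : nat) (x : 'I_N -> V) (z : V) : 'cV[R]_(N * d) :=
  \col_q d1k k (pair_of q).2 (x (pair_of q).1) z.

End Defs.

(* Main.v *)
Require Import Defs.
From HB Require Import structures.
From mathcomp Require Import all_boot all_order all_algebra.
From mathcomp Require Import all_classical all_reals all_analysis.
From mathcomp Require Import lra ring.
Import Order.TTheory GRing.Theory Num.Theory.
Import numFieldNormedType.Exports.
Local Open Scope classical_set_scope.
Local Open Scope ring_scope.
Lemma mvt0 (R : realType) (phi dphi : R -> R) (s : R) :
  (forall u : R, is_derive u (1 : R) phi (dphi u)) ->
  exists xi, `|xi| <= `|s| /\ phi s - phi 0 = s * dphi xi.
Proof.
move=> hd.
have cont : forall a b : R, {within `[a, b], continuous phi}.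
  move=> a b; apply: derivable_within_continuous => u _.
  exact: (@ex_derive _ _ _ _ _ _ _ (hd u)).
have [s0|s0|->] := ltgtP s 0.
- have [c /andP[c1 c2] e] := MVT s0 (fun u _ => hd u) (cont s 0).
  rewrite bnd_simp in c1 c2.
  exists c; split.
    by rewrite (ltr0_norm s0) (ltr0_norm c2) lerN2 ltW.
  move: e; lra.
- have [c /andP[c1 c2] e] := MVT s0 (fun u _ => hd u) (cont 0 s).
  rewrite bnd_simp in c1 c2.
  exists c; split.
    by rewrite (gtr0_norm s0) (gtr0_norm c1) ltW.
  rewrite e subr0 mulrC; lra.
- by exists 0; rewrite subrr mul0r normr0.
Qed.

Lemma dir_derive (R : realType) (d : nat) (F : 'rV[R]_d -> R) (a e : 'rV[R]_d) (u : R) :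
  derivable F (u *: e + a) e ->
  is_derive u (1 : R) (fun t : R => F (t *: e + a)) ('D_e F (u *: e + a)).
Proof.
move=> hd.
have eqf : (fun h : R => h^-1 *: (((fun t : R => F (t *: e + a)) \o shift u) (h *: 1) - F (u *: e + a)))
   = (fun h : R => h^-1 *: ((F \o shift (u *: e + a)) (h *: e) - F (u *: e + a))).
  apply/funext => h /=.
  congr (_ *: (F _ - _)).
  by rewrite scaler1 scalerDl addrA.
apply: DeriveDef.
  by rewrite /derivable eqf.
by rewrite /derive eqf.
Qed.

Lemma dmvt (R : realType) (d : nat) (k : 'rV[R]_d -> 'rV[R]_d -> R) (a b : 'rV[R]_d)
    (l m : 'I_d) (s t : R) :
  kernel_C11 k ->
  exists xi eta, `|xi| <= `|s| /\ `|eta| <= `|t| /\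
   k (s *: ebasis R l + a) (t *: ebasis R m + b) - k (s *: ebasis R l + a) b
   - k a (t *: ebasis R m + b) + k a b
   = s * t * d12k k l m (xi *: ebasis R l + a) (eta *: ebasis R m + b).
Proof.
move=> [_ [h1 [h2 [h12 _]]]].
set e := ebasis R l; set e' := ebasis R m.
pose f1 := fun v : R => k (s *: e + a) (v *: e' + b).
pose f2 := fun v : R => k a (v *: e' + b).
have d1 : forall v : R, is_derive v (1 : R) f1 (d2k k m (s *: e + a) (v *: e' + b)).
  move=> v; exact: (@dir_derive R d (fun y' => k (s *: e + a) y') b e' v (h2 m _ _)).
have d2 : forall v : R, is_derive v (1 : R) f2 (d2k k m a (v *: e' + b)).
  move=> v; exact: (@dir_derive R d (fun y' => k a y') b e' v (h2 m _ _)).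
have [eta [heta E1]] := @mvt0 R _ _ t (fun v => is_deriveB (d1 v) (d2 v)).
pose g := fun u : R => d2k k m (u *: e + a) (eta *: e' + b).
have dg : forall u : R, is_derive u (1 : R) g (d12k k l m (u *: e + a) (eta *: e' + b)).
  move=> u; exact: (@dir_derive R d (fun x' => d2k k m x' (eta *: e' + b)) a e u (h12 l m _ _)).
have [xi [hxi E2]] := @mvt0 R _ _ s dg.
exists xi, eta; split => //; split => //.
move: E1 E2; rewrite /f1 /f2 /g /= !scale0r !add0r => E1 E2.
have E1' : k (s *: e + a) (t *: e' + b) - k a (t *: e' + b) - (k (s *: e + a) b - k a b)
   = t * (s * d12k k l m (xi *: e + a) (eta *: e' + b)).
  by rewrite -E2 -E1 !fctE scale0r add0r.
rewrite -[RHS]/(t * (s * _)) in E1'.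
lra.
Qed.

Lemma ball_shift (R : realType) (d : nat) (a e : 'rV[R]_d) (r xi : R) :
  0 < r -> `|xi| < r / (`|e| + 1) -> ball a r (xi *: e + a).
Proof.
move=> r0 hxi.
rewrite -ball_normE /ball_ /=.
have -> : a - (xi *: e + a) = - (xi *: e) by rewrite opprD addrCA subrr addr0.
rewrite normrN normrZ.
have e0 : 0 <= `|e| by [].
have e1 : 0 < `|e| + 1 by rewrite ltr_wpDl.
move: hxi; rewrite ltr_pdivlMr // => hxi.
have : `|xi| * `|e| <= `|xi| * (`|e| + 1) by rewrite ler_wpM2l // lerDl.
move=> h; exact: (le_lt_trans h hxi).
Qed.

Lemma cont12 (R : realType) (d : nat) (k : 'rV[R]_d -> 'rV[R]_d -> R) (a b : 'rV[R]_d)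
    (l m : 'I_d) (eps : R) :
  kernel_C11 k -> 0 < eps ->
  exists2 del : R, 0 < del & forall xi eta : R, `|xi| < del -> `|eta| < del ->
    `|d12k k l m a b - d12k k l m (xi *: ebasis R l + a) (eta *: ebasis R m + b)| < eps.
Proof.
move=> [_ [_ [_ [_ [_ [_ hc]]]]]] e0.
have := hc l m (a, b).
move/cvgrPdist_lt => /(_ eps e0) /nbhs_ballP [r r0 hr].
exists (Num.min (r / (`|ebasis R l| + 1)) (r / (`|ebasis R m| + 1))).
  by rewrite lt_min !divr_gt0 // ltr_wpDl.
move=> xi eta; rewrite !lt_min => /andP[h1 _] /andP[_ h2].
apply: (hr (xi *: ebasis R l + a, eta *: ebasis R m + b)).
by split; apply: ball_shift.
Qed.

Set Implicit Arguments. Unset Strict Implicit.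

Definition rkhs_ok (R : realType) (d : nat) (k : 'rV[R]_d -> 'rV[R]_d -> R)
  (H : set ('rV[R]_d -> R)) (ip : ('rV[R]_d -> R) -> ('rV[R]_d -> R) -> R) := is_RKHS k H ip.

Lemma rk_H0 R d k H ip : @is_RKHS R d k H ip -> H (fun=> 0).
Proof. by case. Qed.
Lemma rk_HD R d k H ip : @is_RKHS R d k H ip -> forall f g, H f -> H g -> H (f \+ g).
Proof. by case=> _ []. Qed.
Lemma rk_HZ R d k H ip : @is_RKHS R d k H ip -> forall a f, H f -> H (fun x => a * f x).
Proof. by case=> _ [] _ []. Qed.
Lemma rk_C R d k H ip : @is_RKHS R d k H ip -> forall f g, H f -> H g -> ip f g = ip g f.
Proof. by case=> _ [] _ [] _ []. Qed.
Lemma rk_Dl R d k H ip : @is_RKHS R d k H ip ->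
  forall f g h, H f -> H g -> H h -> ip (f \+ g) h = ip f h + ip g h.
Proof. by case=> _ [] _ [] _ [] _ []. Qed.
Lemma rk_Zl R d k H ip : @is_RKHS R d k H ip ->
  forall a f g, H f -> H g -> ip (fun x => a * f x) g = a * ip f g.
Proof. by case=> _ [] _ [] _ [] _ [] _ []. Qed.
Lemma rk_pos R d k H ip : @is_RKHS R d k H ip -> forall f, H f -> 0 <= ip f f.
Proof. by case=> _ [] _ [] _ [] _ [] _ [] _ []. Qed.
Lemma rk_def R d k H ip : @is_RKHS R d k H ip -> forall f, H f -> ip f f = 0 -> f = (fun=> 0).
Proof. by case=> _ [] _ [] _ [] _ [] _ [] _ [] _ []. Qed.
Lemma rk_Hk R d k H ip : @is_RKHS R d k H ip -> forall x, H (k x).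
Proof. by case=> _ [] _ [] _ [] _ [] _ [] _ [] _ [] _ [] _ []. Qed.
Lemma rk_rep R d k H ip : @is_RKHS R d k H ip -> forall f x, H f -> ip f (k x) = f x.
Proof. by case=> _ [] _ [] _ [] _ [] _ [] _ [] _ [] _ [] _ []. Qed.

Lemma rk_Dr R d k H ip : @is_RKHS R d k H ip ->
  forall f g h, H f -> H g -> H h -> ip h (f \+ g) = ip h f + ip h g.
Proof.
move=> hR f g h hf hg hh.
rewrite (rk_C hR hh (rk_HD hR hf hg)) (rk_Dl hR) //.
by rewrite (rk_C hR hf hh) (rk_C hR hg hh).
Qed.
Lemma rk_Zr R d k H ip : @is_RKHS R d k H ip ->
  forall a f g, H f -> H g -> ip g (fun x => a * f x) = a * ip g f.
Proof.
move=> hR a f g hf hg.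
by rewrite (rk_C hR hg (rk_HZ hR a hf)) (rk_Zl hR) // (rk_C hR hf hg).
Qed.

Lemma rk_HB R d k H ip : @is_RKHS R d k H ip -> forall f g, H f -> H g -> H (f \- g).
Proof.
move=> hR f g hf hg.
have -> : f \- g = f \+ (fun x => -1 * g x) by apply/funext => x /=; rewrite mulN1r.
by apply: (rk_HD hR) => //; apply: (rk_HZ hR).
Qed.
Lemma rk_Bl R d k H ip : @is_RKHS R d k H ip ->
  forall f g h, H f -> H g -> H h -> ip (f \- g) h = ip f h - ip g h.
Proof.
move=> hR f g h hf hg hh.
have -> : f \- g = f \+ (fun x => -1 * g x) by apply/funext => x /=; rewrite mulN1r.
rewrite (rk_Dl hR) //; last exact: (rk_HZ hR).
by rewrite (rk_Zl hR) // mulN1r.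
Qed.
Lemma rk_Br R d k H ip : @is_RKHS R d k H ip ->
  forall f g h, H f -> H g -> H h -> ip h (f \- g) = ip h f - ip h g.
Proof.
move=> hR f g h hf hg hh.
rewrite (rk_C hR hh (rk_HB hR hf hg)) (rk_Bl hR) //.
by rewrite (rk_C hR hf hh) (rk_C hR hg hh).
Qed.
Lemma rk_0l R d k H ip : @is_RKHS R d k H ip -> forall h, H h -> ip (fun=> 0) h = 0.
Proof.
move=> hR h hh.
have -> : (fun=> 0) = (fun x : 'rV[R]_d => 0 * (fun=> 0 : R) x) by apply/funext => x; rewrite mul0r.
by rewrite (rk_Zl hR) ?mul0r //; exact: (rk_H0 hR).
Qed.

Lemma rk_CS R d k H ip : @is_RKHS R d k H ip -> forall u v, H u -> H v ->
  ip u v ^+ 2 <= ip u u * ip v v.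
Proof.
move=> hR u v hu hv.
have [v0|vpos] := eqVneq (ip v v) 0.
  have -> : v = fun=> 0 by apply: (rk_def hR).
  have h0 := rk_H0 hR.
  by rewrite (rk_C hR hu h0) !(rk_0l hR) // expr0n /= mulr0.
have vp : 0 < ip v v by rewrite lt_def vpos (rk_pos hR).
set t := - (ip u v / ip v v).
have hw : H (u \+ (fun x => t * v x)) by apply: (rk_HD hR) => //; apply: (rk_HZ hR).
have := rk_pos hR hw.
rewrite (rk_Dl hR) //; last exact: (rk_HZ hR).
rewrite !(rk_Dr hR) //; try exact: (rk_HZ hR).
have hz : H (fun x => t * v x) by exact: (rk_HZ hR).
rewrite !(rk_Zl hR) // !(rk_Zr hR) // (rk_C hR hv hu).
rewrite /t => h.
have : 0 <= (ip u u + - (ip u v / ip v v) * ip u v +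
   (- (ip u v / ip v v) * ip u v + - (ip u v / ip v v) * (- (ip u v / ip v v) * ip v v))) * ip v v.
  by rewrite mulr_ge0 // ltW.
have -> : (ip u u + - (ip u v / ip v v) * ip u v +
   (- (ip u v / ip v v) * ip u v + - (ip u v / ip v v) * (- (ip u v / ip v v) * ip v v))) * ip v v
   = ip u u * ip v v - ip u v ^+ 2.
  by field.
by rewrite subr_ge0.
Qed.

Set Implicit Arguments. Unset Strict Implicit.

Lemma near0' (R : realType) (P : R -> Prop) :
  (exists2 del : R, 0 < del & forall h, h != 0 -> `|h| < del -> P h) ->
  \forall h \near (0:R)^', P h.
Proof.
move=> [del d0 hP].
change (\forall y \near (0:R), y != 0 -> P y).
apply/nbhs_norm0P.
exists del => // y /= hy hy0.
exact: hP.
Qed.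

Lemma sq_small (R : realType) (x A B eps : R) :
  0 < eps -> 0 <= B -> x ^+ 2 <= A * B -> A < eps ^+ 2 / (B + 1) -> `|x| < eps.
Proof.
move=> e0 b0 h1 h2.
have b1 : 0 < B + 1 by rewrite ltr_wpDl.
have a0 : 0 <= A -> A * B < eps ^+ 2.
  move=> a0.
  have : A * (B + 1) < eps ^+ 2 by rewrite -ltr_pdivlMr.
  move=> h; apply: le_lt_trans h; rewrite ler_wpM2l //; lra.
have hx : x ^+ 2 < eps ^+ 2.
  have [a_ge|a_lt] := leP 0 A.
    exact: le_lt_trans h1 (a0 a_ge).
  apply: le_lt_trans h1 _.
  have : A * B <= 0 by rewrite mulr_le0_ge0 // ltW.
  move=> h; apply: le_lt_trans h _; exact: exprn_gt0.
rewrite -(ltr_pXn2r (n:=2)) //; first by rewrite real_normK ?num_real.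
by rewrite nnegrE ltW.
Qed.

Lemma rk_sum (R : realType) (d : nat) k H ip : @is_RKHS R d k H ip ->
  forall n (F : 'I_n -> 'rV[R]_d -> R) g, (forall i, H (F i)) -> H g ->
  H (fun z => \sum_(i < n) F i z) /\
  ip (fun z => \sum_(i < n) F i z) g = \sum_(i < n) ip (F i) g.
Proof.
move=> hR; elim=> [|n IH] F g hF hg.
  have -> : (fun z => \sum_(i < 0) F i z) = (fun=> 0).
    by apply/funext => z; rewrite big_ord0.
  by rewrite big_ord0 (rk_0l hR) //; split => //; exact: (rk_H0 hR).
have -> : (fun z => \sum_(i < n.+1) F i z) =
   (fun z => \sum_(i < n) F (widen_ord (leqnSn n) i) z) \+ F ord_max.
  by apply/funext => z; rewrite big_ord_recr.
have [h1 h2] := IH (fun i => F (widen_ord (leqnSn n) i)) g (fun i => hF _) hg.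
split; first exact: (rk_HD hR).
by rewrite (rk_Dl hR) // h2 big_ord_recr.
Qed.

Lemma lim_ip (R : realType) (d : nat) k H ip : @is_RKHS R d k H ip ->
  forall (un : nat -> 'rV[R]_d -> R) u v, (forall n, H (un n)) -> H u -> H v ->
  (forall e : R, 0 < e -> exists M, forall n, (M <= n)%N -> ip (un n \- u) (un n \- u) < e) ->
  forall e : R, 0 < e -> exists M, forall n, (M <= n)%N -> `|ip (un n) v - ip u v| < e.
Proof.
move=> hR un u v hun hu hv hc e e0.
have hb : 0 < e ^+ 2 / (ip v v + 1).
  by rewrite divr_gt0 ?exprn_gt0 // ltr_wpDl // (rk_pos hR).
have [M hM] := hc _ hb.
exists M => n hn.
rewrite -(rk_Bl hR) //.
apply: (sq_small (A := ip (un n \- u) (un n \- u)) e0 (rk_pos hR hv)); last exact: hM.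
by apply: (rk_CS hR) => //; apply: (rk_HB hR).
Qed.

Set Implicit Arguments. Unset Strict Implicit.

Lemma rk_comp R d k H ip : @is_RKHS R d k H ip ->
  (forall u : nat -> 'rV[R]_d -> R, (forall n, H (u n)) ->
     (forall e : R, 0 < e -> exists M, forall m n, (M <= m)%N -> (M <= n)%N ->
        ip (u m \- u n) (u m \- u n) < e) ->
     exists f, H f /\ forall e : R, 0 < e -> exists M, forall n, (M <= n)%N ->
        ip (u n \- f) (u n \- f) < e).
Proof. by case=> _ [] _ [] _ [] _ [] _ [] _ [] _ [] _ []. Qed.

Lemma hs_small (R : realType) (del : R) : 0 < del ->
  exists N0, forall n, (N0 <= n)%N -> `|(n.+1%:R : R)^-1| < del.
Proof.
move=> d0; exists (Num.trunc del^-1) => n hn.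
rewrite ger0_norm ?invr_ge0 // invf_plt ?posrE //.
apply: lt_le_trans (truncnS_gt _) _.
by rewrite ler_nat ltnS.
Qed.

Lemma dist2 (R : realType) (c x y e1 e2 : R) :
  `|c - x| < e1 -> `|x - y| < e2 -> `|c - y| < e1 + e2.
Proof.
rewrite !ltr_distlC => /andP[h1 h2] /andP[h3 h4].
apply/andP; split; lra.
Qed.

Lemma feat (R : realType) (d : nat) (k : 'rV[R]_d -> 'rV[R]_d -> R) H ip (a : 'rV[R]_d) (l : 'I_d) :
  kernel_spd k -> kernel_C11 k -> @is_RKHS R d k H ip ->
  H (d1k k l a) /\ forall f, H f -> partial l f a = ip f (d1k k l a).
Proof.
move=> hsp hC hR.
set e := ebasis R l.
have Hk := rk_Hk hR.
pose q := fun (s : R) (y : 'rV[R]_d) => s^-1 * (k (s *: e + a) y - k a y).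
have Hq : forall s, H (q s) := fun s => rk_HZ hR s^-1 (rk_HB hR (Hk _) (Hk a)).
have ipfq : forall f s, H f -> ip f (q s) = s^-1 * (f (s *: e + a) - f a).
  move=> f s hf.
  change (ip f (fun y => s^-1 * (k (s *: e + a) \- k a) y) = s^-1 * (f (s *: e + a) - f a)).
  rewrite (rk_Zr hR) //; last exact: (rk_HB hR).
  by rewrite (rk_Br hR) // !(rk_rep hR).
have ipqq : forall s t, ip (q s) (q t) = s^-1 * t^-1 *
    (k (s *: e + a) (t *: e + a) - k (s *: e + a) a - k a (t *: e + a) + k a a).
  move=> s t; rewrite ipfq // /q; ring.
set c := d12k k l l a a.
have LemA : forall eps : R, 0 < eps -> exists2 del : R, 0 < del & forall s t : R,
    s != 0 -> t != 0 -> `|s| < del -> `|t| < del -> `|c - ip (q s) (q t)| < eps.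
  move=> eps e0; have [del d0 hd] := @cont12 R d k a a l l eps hC e0.
  exists del => // s t s0 t0 hs ht.
  have [xi [eta [hxi [heta E]]]] := @dmvt R d k a a l l s t hC.
  rewrite ipqq E.
  have -> : s^-1 * t^-1 * (s * t * d12k k l l (xi *: ebasis R l + a) (eta *: ebasis R l + a))
     = d12k k l l (xi *: ebasis R l + a) (eta *: ebasis R l + a).
  by field; rewrite t0 s0.
  by apply: hd; [exact: le_lt_trans hxi hs | exact: le_lt_trans heta ht].
pose hs := fun n : nat => (n.+1%:R : R)^-1.
have hs0 : forall n, hs n != 0 by move=> n; rewrite /hs invr_eq0 pnatr_eq0.
pose qn := fun n => q (hs n).
have Hqn : forall n, H (qn n) by move=> n; exact: Hq.
have cauchy : forall eps : R, 0 < eps -> exists M, forall m n, (M <= m)%N -> (M <= n)%N ->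
    ip (qn m \- qn n) (qn m \- qn n) < eps.
  move=> eps e0.
  have e4 : 0 < eps / 4 by rewrite divr_gt0.
  have [del d0 hd] := LemA _ e4.
  have [N0 hN0] := hs_small d0.
  exists N0 => m n hm hn.
  rewrite (rk_Bl hR) //; last exact: (rk_HB hR).
  rewrite (rk_Br hR (Hqn m) (Hqn n) (Hqn m)) (rk_Br hR (Hqn m) (Hqn n) (Hqn n)).
  have := hd _ _ (hs0 m) (hs0 m) (hN0 _ hm) (hN0 _ hm).
  have := hd _ _ (hs0 m) (hs0 n) (hN0 _ hm) (hN0 _ hn).
  have := hd _ _ (hs0 n) (hs0 m) (hN0 _ hn) (hN0 _ hm).
  have := hd _ _ (hs0 n) (hs0 n) (hN0 _ hn) (hN0 _ hn).
  rewrite /qn !ltr_distlC => /andP[? ?] /andP[? ?] /andP[? ?] /andP[? ?].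
  lra.
have [g [Hg hg]] := rk_comp hR Hqn cauchy.
have i1 : forall eps : R, 0 < eps -> exists2 del : R, 0 < del & forall s : R,
    s != 0 -> `|s| < del -> `|c - ip g (q s)| < eps + eps.
  move=> eps e0; have [del d0 hd] := LemA _ e0.
  exists del => // s s0 sd.
  have [M hM] := lim_ip hR Hqn Hg (Hq s) hg e0.
  have [N0 hN0] := hs_small d0.
  have h1 := hM (maxn M N0) (leq_maxl _ _).
  have h2 := hd _ _ (hs0 (maxn M N0)) s0 (hN0 _ (leq_maxr _ _)) sd.
  exact: dist2 h2 h1.
have claim : forall eps : R, 0 < eps -> exists2 del : R, 0 < del & forall s : R,
    s != 0 -> `|s| < del -> ip (q s \- g) (q s \- g) < eps.
  move=> eps e0.
  have e8 : 0 < eps / 8 by rewrite divr_gt0.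
  have [del d0 hd] := LemA _ e8.
  have [del2 d2 hd2] := i1 _ e8.
  exists (Num.min del del2); first by rewrite lt_min d0 d2.
  move=> s s0; rewrite lt_min => /andP[sd sd2].
  have ii : `|c - ip g g| < eps / 8 + eps / 8 + eps / 8.
    have [M hM] := lim_ip hR Hqn Hg Hg hg e8.
    have [N0 hN0] := hs_small d2.
    have h1 := hM (maxn M N0) (leq_maxl _ _).
    have h2 := hd2 _ (hs0 (maxn M N0)) (hN0 _ (leq_maxr _ _)).
    rewrite (rk_C hR Hg (Hq _)) in h2.
    exact: dist2 h2 h1.
  have h3 := hd2 _ s0 sd2.
  have h4 := hd _ _ s0 s0 sd sd.
  rewrite (rk_Bl hR) //; last exact: (rk_HB hR).
  rewrite (rk_Br hR (Hq s) Hg (Hq s)) (rk_Br hR (Hq s) Hg Hg) (rk_C hR (Hq s) Hg).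
  move: ii h3 h4; rewrite !ltr_distlC => /andP[? ?] /andP[? ?] /andP[? ?].
  lra.
have conv : forall f, H f ->
    (fun h : R => h^-1 *: ((f \o shift a) (h *: e) - f a)) @ (0:R)^' --> ip f g.
  move=> f hf; apply/cvgrPdist_lt => eps e0; apply: near0'.
  have hb : 0 < eps ^+ 2 / (ip f f + 1).
    by rewrite divr_gt0 ?exprn_gt0 // ltr_wpDl // (rk_pos hR).
  have [del d0 hdel] := claim _ hb.
  exists del => // h h0 hd /=.
  rewrite -[h^-1 *: _]/(h^-1 * _) -ipfq // distrC -(rk_Br hR) //.
  apply: (sq_small (A := ip (q h \- g) (q h \- g)) e0 (rk_pos hR hf)); last exact: hdel.
  by rewrite mulrC; apply: (rk_CS hR) => //; apply: (rk_HB hR).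
have deq : forall f, H f -> partial l f a = ip f g.
  move=> f hf; rewrite /partial /derive.
  exact: (cvg_lim _ (conv f hf)).
have eg : g = d1k k l a.
  apply/funext => y; rewrite /d1k.
  have -> : (fun x' => k x' y) = k y.
    by apply/funext => x'; case: hsp => sym _; exact: sym.
  by rewrite (deq (k y) (Hk y)) (rk_C hR (Hk y) Hg) (rk_rep hR).
by rewrite -eg; split => // f hf; exact: deq.
Qed.


Unset Implicit Arguments. Set Strict Implicit.

Lemma sum_pair (R : realType) (N d : nat) (F : 'I_N -> 'I_d -> R) :
  \sum_(i < N) \sum_(l < d) F i l = \sum_(q < N * d) F (pair_of q).1 (pair_of q).2.
Proof.
rewrite pair_big /=.
have bij : bijective (@pair_of d N).
  exists (fun p => cast_ord (mxvec_cast N d) (enum_rank p)) => q.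
    by rewrite /pair_of enum_valK cast_ordKV.
  by rewrite /pair_of cast_ordK enum_rankK.
by rewrite (reindex (@pair_of d N)) //; apply: onW_bij.
Qed.

Lemma unit_of_inj (R : realType) (n : nat) (M : 'M[R]_n) :
  (forall w : 'rV[R]_n, w *m M = 0 -> w = 0) -> M \in unitmx.
Proof.
move=> hinj; rewrite -row_free_unit -kermx_eq0; apply/eqP.
apply/row_matrixP => i; rewrite row0; apply: hinj.
by rewrite -row_mul mulmx_ker row0.
Qed.

Lemma key (R : realType) (d : nat) (k : 'rV[R]_d -> 'rV[R]_d -> R)
  (H : set ('rV[R]_d -> R)) (ip : ('rV[R]_d -> R) -> ('rV[R]_d -> R) -> R)
  (dT : measure_display) (T : measurableType dT) (P : probability T R)
  (Y : T -> 'rV[R]_d) (m_pi : 'rV[R]_d -> R)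
  (lambda : R) (N : nat) (x : 'I_N -> 'rV[R]_d)
  (S : ('rV[R]_d -> R) -> ('rV[R]_d -> R)) (f : 'rV[R]_d -> R) :
  is_RKHS k H ip ->
  is_mean_embedding P Y H ip m_pi ->
  is_S_op x H ip S ->
  H f ->
  (S f \+ (fun z => lambda * f z)) =
    (fun z => N%:R^-1 * \sum_(i < N) k (x i) z) \- m_pi ->
  forall h, H h ->
  N%:R^-1 * (\sum_(i < N) \sum_(l < d) partial l h (x i) * partial l f (x i))
  + lambda * ip h f
  = N%:R^-1 * \sum_(i < N) h (x i) - Rintegral P setT (fun t => h (Y t)).
Proof.
move=> hR [Hm hm] hS Hf Heq h Hh.
have [HSf hSf] := hS f Hf.
have e1 := congr1 (fun F => ip h F) Heq; move: e1 => /=.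
have Hlf := rk_HZ hR lambda Hf.
have [Hsum ipsum] := rk_sum hR (F := fun i => k (x i)) (fun i => rk_Hk hR (x i)) Hh.
have HNs := rk_HZ hR N%:R^-1 Hsum.
rewrite (rk_Dr hR HSf Hlf Hh) (rk_Br hR HNs Hm Hh).
rewrite (rk_Zr hR lambda Hf Hh) (rk_Zr hR _ Hsum Hh).
rewrite (hSf h Hh).
rewrite (rk_C hR Hh Hsum) ipsum.
have [_ ->] := hm h Hh.
move=> ->; congr (_ * _ - _).
by apply: eq_bigr => i _; rewrite (rk_C hR (rk_Hk hR _) Hh) (rk_rep hR).
Qed.


Lemma aux1 (R : realType) (n a b c w lam : R) : n != 0 ->
  n^-1 * a + lam * w = n^-1 * b - c -> a + n * lam * w = b - n * c.
Proof.
move=> n0 h.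
transitivity (n * (n^-1 * a + lam * w)); first by field.
by rewrite h; field.
Qed.

Lemma aux2 (R : realType) (n a b c fz lam : R) : n != 0 -> lam != 0 ->
  n^-1 * a + lam * fz = n^-1 * b - c -> fz = b / (n * lam) - c / lam - (n * lam)^-1 * a.
Proof.
move=> n0 l0 h.
have -> : fz = lam^-1 * (n^-1 * a + lam * fz) - lam^-1 * n^-1 * a.
  by field; rewrite ?l0 ?n0.
by rewrite h; field; rewrite ?l0 ?n0.
Qed.

Theorem proposition2 (R : realType) (d : nat) (k : 'rV[R]_d -> 'rV[R]_d -> R)
  (H : set ('rV[R]_d -> R)) (ip : ('rV[R]_d -> R) -> ('rV[R]_d -> R) -> R)
  (dT : measure_display) (T : measurableType dT) (P : probability T R)
  (Y : T -> 'rV[R]_d) (m_pi : 'rV[R]_d -> R)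
  (lambda : R) (N : nat) (x : 'I_N -> 'rV[R]_d)
  (S : ('rV[R]_d -> R) -> ('rV[R]_d -> R)) (f : 'rV[R]_d -> R) :
  kernel_spd k -> kernel_C11 k -> is_RKHS k H ip ->
  is_mean_embedding P Y H ip m_pi ->
  0 < lambda -> (0 < N)%N ->
  is_S_op x H ip S ->
  (* f = f_{muhat,pi} = (S + lambda Id)^{-1} (m_muhat - m_pi) *)
  H f ->
  (S f \+ (fun z => lambda * f z)) =
    (fun z => N%:R^-1 * \sum_(i < N) k (x i) z) \- m_pi ->
  forall z : 'rV[R]_d,
    f z =
      ((const_mx 1 : 'cV[R]_N)^T *m KX k x z) 0 0 / (N%:R * lambda)
      - Rintegral P setT (fun t => k (Y t) z) / lambda
      - ((DX k x z)^T *m invmx (HXX k x + (N%:R * lambda)%:M)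
           *m ((N%:R * lambda)^-1 *: (DXX k x *m (const_mx 1 : 'cV[R]_N))
               - lambda^-1 *: \col_q Rintegral P setT
                                 (fun t => d1k k (pair_of q).2 (x (pair_of q).1) (Y t))))
        0 0.
Proof.
move=> hsp hC hR hme lam0 N0 hS Hf Heq z.
have sym : forall u w, k u w = k w u by case: hsp.
have Nn0 : (N%:R : R) != 0 by rewrite pnatr_eq0 -lt0n.
have lamn0 : lambda != 0 by rewrite gt_eqF.
have HF : forall a l, H (d1k k l a) by move=> a l; case: (feat a l hsp hC hR).
have pf : forall g a l, H g -> partial l g a = ip g (d1k k l a).
  by move=> g a l Hg; case: (feat a l hsp hC hR) => _ ->.
pose G := fun q : 'I_(N * d) => d1k k (pair_of q).2 (x (pair_of q).1).
have HG : forall q, H (G q) by move=> q; exact: HF.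
have HXXip : forall q r, HXX k x r q = ip (G q) (G r).
  move=> q r; rewrite mxE /G -pf //.
  have -> : d1k k (pair_of q).2 (x (pair_of q).1) =
            (fun y => d2k k (pair_of q).2 y (x (pair_of q).1)).
    apply/funext => y; rewrite /d1k /d2k.
    by congr (partial _ _ _); apply/funext => x'; exact: sym.
  by [].
pose v : 'cV[R]_(N * d) := \col_q ip f (G q).
pose E : 'cV[R]_(N * d) := \col_q Rintegral P setT
                                 (fun t => d1k k (pair_of q).2 (x (pair_of q).1) (Y t)).
pose M := HXX k x + (N%:R * lambda)%:M.
have hkey := @key R d k H ip dT T P Y m_pi lambda N x S f hR hme hS Hf Heq.
have eqr : M *m v = DXX k x *m (const_mx 1 : 'cV[R]_N) - N%:R *: E.
  apply/matrixP => r j; rewrite (ord1 j) {j}.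
  have := hkey (G r) (HG r).
  have -> : \sum_(i < N) \sum_(l < d) partial l (G r) (x i) * partial l f (x i)
      = \sum_(q < N * d) HXX k x r q * v q 0.
    rewrite (@sum_pair R N d (fun i l => partial l (G r) (x i) * partial l f (x i))).
    apply: eq_bigr => q _.
    by rewrite !pf // HXXip (rk_C hR (HG r) (HF _ _)) mxE.
  have -> : ip (G r) f = v r 0 by rewrite mxE (rk_C hR (HG r) Hf).
  rewrite /M mulmxDl mul_scalar_mx !mxE.
  move=> h.
  under [in RHS]eq_bigr => j _ do rewrite !mxE mulr1.
  exact: aux1 h.
have Munit : M \in unitmx.
  apply: unit_of_inj => w hw.
  pose Phi := fun y => \sum_(q < N * d) w 0 q * G q y.
  have HFq : forall q, H (fun y => w 0 q * G q y) := fun q => rk_HZ hR (w 0 q) (HG q).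
  have HPhi : H Phi := (rk_sum hR (F := fun q y => w 0 q * G q y) HFq Hf).1.
  have ipGPhi : forall r, ip Phi (G r) = \sum_q w 0 q * ip (G q) (G r).
    move=> r; have [_ ->] := rk_sum hR (F := fun q y => w 0 q * G q y) HFq (HG r).
    by apply: eq_bigr => q _; rewrite (rk_Zl hR _ (HG q) (HG r)).
  have qf : ip Phi Phi = \sum_q \sum_r w 0 q * w 0 r * HXX k x q r.
    have [_ ->] := rk_sum hR (F := fun q y => w 0 q * G q y) HFq HPhi.
    apply: eq_bigr => q _; rewrite (rk_Zl hR _ (HG q) HPhi) (rk_C hR (HG q) HPhi).
    rewrite ipGPhi mulr_sumr; apply: eq_bigr => r _.
    by rewrite HXXip mulrA.
  have q0 : \sum_r (w *m M) 0 r * w 0 r = 0.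
    by rewrite hw; apply: big1 => r _; rewrite mxE mul0r.
  move: q0; rewrite /M mulmxDr mul_mx_scalar.
  under eq_bigr => r _ do rewrite !mxE mulrDl.
  rewrite big_split /=.
  have -> : \sum_r (\sum_q w 0 q * HXX k x q r) * w 0 r = ip Phi Phi.
    rewrite qf exchange_big /=; apply: eq_bigr => q _.
    rewrite mulr_suml; apply: eq_bigr => r _; ring.
  move=> h0.
  have pos1 := rk_pos hR HPhi.
  have nn : forall r : 'I_(N * d), true -> 0 <= N%:R * lambda * w 0 r * w 0 r.
    move=> r _; rewrite -mulrA; apply: mulr_ge0.
      by apply: mulr_ge0; [exact: ler0n | exact: ltW].
    by rewrite -expr2 sqr_ge0.
  have pos2 : 0 <= \sum_r N%:R * lambda * w 0 r * w 0 r by apply: sumr_ge0.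
  have s0 : \sum_r N%:R * lambda * w 0 r * w 0 r = 0 by lra.
  apply/rowP => r; rewrite mxE.
  have := psumr_eq0P nn s0 (i := r) isT.
  rewrite -mulrA => /eqP; rewrite mulf_eq0 mulf_eq0 (negbTE Nn0) (negbTE lamn0) /=.
  by rewrite mulf_eq0 orbb => /eqP.
have veq : v = invmx M *m (DXX k x *m (const_mx 1 : 'cV[R]_N) - N%:R *: E).
  by rewrite -eqr mulKmx.
have := hkey (k z) (rk_Hk hR z).
rewrite (@sum_pair R N d (fun i l => partial l (k z) (x i) * partial l f (x i))).
have -> : \sum_(q < N * d) partial (pair_of q).2 (k z) (x (pair_of q).1) *
                          partial (pair_of q).2 f (x (pair_of q).1)
    = \sum_(q < N * d) DX k x z q 0 * v q 0.
  apply: eq_bigr => q _.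
  rewrite (pf (k z) _ _ (rk_Hk hR z)) (pf f _ _ Hf) !mxE.
  by rewrite (rk_C hR (rk_Hk hR z) (HG q)) (rk_rep hR _ (HG q)).
rewrite (rk_C hR (rk_Hk hR z) Hf) (rk_rep hR _ Hf).
have -> : (fun t => k z (Y t)) = (fun t => k (Y t) z) by apply/funext => t; exact: sym.
have -> : \sum_(i < N) k z (x i) = \sum_(i < N) k (x i) z by apply: eq_bigr => i _; exact: sym.
move=> h.
have -> : (N%:R * lambda)^-1 *: (DXX k x *m (const_mx 1 : 'cV[R]_N)) - lambda^-1 *: E
    = (N%:R * lambda)^-1 *: (DXX k x *m (const_mx 1 : 'cV[R]_N) - N%:R *: E).
  by rewrite scalerBr scalerA invfM mulrAC mulVf // mul1r.
rewrite -scalemxAr -mulmxA -veq.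
rewrite !mxE.
under eq_bigr => j _ do rewrite !mxE mul1r.
under [X in _ - _ - _ * X]eq_bigr => j _ do rewrite !mxE.
have e : \sum_(q < N * d) DX k x z q 0 * v q 0 = \sum_(q < N * d) d1k k (pair_of q).2 (x (pair_of q).1) z * ip f (G q).
  by apply: eq_bigr => q _; rewrite !mxE.
rewrite e in h.
exact: (@aux2 R _ _ _ _ _ _ Nn0 lamn0 h).
Qed.
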